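(* Let $\mathbb F$ be any field, $n\ge k\ge1$, let $\mathbf z\in\mathbb F^n$ with $\mathbf z_1=-1$, and let $\mathcal K=\{X\in M_{n\times k}(\mathbb F): \mathbf z^tX=0\}$. Then $\det_{n,k}(X)=0$ for all $X\in\mathcal K$ if and only if $$1+\sum_{\alpha=1}^k \mathbf z_{c(\alpha)}(-1)^{\alpha-c(\alpha)}=0$$ for every $k$-element subset $c=\{c(1)<\dots<c(k)\}$ of $[n]$ with $1\notin c$.
   Context: Cullis' determinant: for $n\ge k$, $\det_{n,k}(X)=\sum_{c}\operatorname{sgn}(c)\det(X[c|))$, sum over $k$-subsets $c=\{c(1)<\dots<c(k)\}$ of $[n]=\{1,\dots,n\}$, $X[c|)$ the $k\times k$ submatrix formed by the rows with indices in $c$, $\operatorname{sgn}(c)=(-1)^{\sum_{\alpha=1}^k(c(\alpha)-\alpha)}$. *)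

(* Defs.v *)
From HB Require Import structures.
From mathcomp Require Import all_boot all_order all_algebra.
Set Implicit Arguments. Unset Strict Implicit. Unset Printing Implicit Defensive.
Import GRing.Theory.
Local Open Scope ring_scope.

(* A k-element subset c = {c(1) < ... < c(k)} of [n] is represented by the
   strictly increasing map c : 'I_k -> 'I_n (0-based indices: alpha-1 |-> c(alpha)-1). *)
Definition incr_fun (n k : nat) (c : {ffun 'I_k -> 'I_n}) : bool :=
  [forall i : 'I_k, forall j : 'I_k, (i < j)%N ==> (c i < c j)%N].

(* sgn(c) = (-1)^(sum_alpha (c(alpha) - alpha)); differences are index-shift invariant *)
Definition cullis_sgn (F : fieldType) (n k : nat) (c : {ffun 'I_k -> 'I_n}) : F :=
  (-1) ^+ (\sum_(a < k) (c a - a))%N.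

Definition cullis_det (F : fieldType) (n k : nat) (X : 'M[F]_(n, k)) : F :=
  \sum_(c : {ffun 'I_k -> 'I_n} | incr_fun c) cullis_sgn F c * \det (rowsub c X).

(* Main.v *)
Require Import Defs.
From HB Require Import structures.
From mathcomp Require Import all_boot all_order all_algebra perm zify.
Set Implicit Arguments. Unset Strict Implicit.
Import GRing.Theory.
Local Open Scope ring_scope.


Lemma det_trE (F : fieldType) (k : nat) (M : 'M[F]_k) :
  \det M = \sum_(s : 'S_k) (-1) ^+ s * \prod_i M (s i) i.
Proof. rewrite -det_tr /determinant; apply: eq_bigr => s _; congr (_ * _); apply: eq_bigr => i _; by rewrite mxE. Qed.

Lemma det_mul_expand (F : fieldType) (k M : nat) (A : 'M[F]_(k, M)) (Y : 'M[F]_(M, k)) :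
  \det (A *m Y) = \sum_(f : {ffun 'I_k -> 'I_M}) (\prod_i Y (f i) i) * \det (colsub f A).
Proof.
rewrite det_trE.
under eq_bigr => s _.
  rewrite (eq_bigr (fun i => \sum_j A (s i) j * Y j i)); last first.
    by move=> i _; rewrite !mxE.
  rewrite bigA_distr_bigA /= big_distrr /=.
  over.
rewrite exchange_big /=; apply: eq_bigr => f _.
rewrite det_trE big_distrr /=; apply: eq_bigr => s _.
rewrite mulrCA; congr (_ * _).
rewrite big_split /= mulrC; congr (_ * _); apply: eq_bigr => i _; by rewrite !mxE.
Qed.

Lemma cullis_expand (F : fieldType) (N M k : nat) (B : 'M[F]_(N, M)) (Y : 'M[F]_(M, k)) :
  cullis_det (B *m Y) = \sum_(f : {ffun 'I_k -> 'I_M}) (\prod_i Y (f i) i) * cullis_det (colsub f B).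
Proof.
rewrite /cullis_det.
under eq_bigr => c _ do rewrite -mul_rowsub_mx det_mul_expand big_distrr /=.
rewrite exchange_big /=; apply: eq_bigr => f _.
rewrite big_distrr /=; apply: eq_bigr => c _.
rewrite mulrCA; congr (_ * (_ * \det _)).
by apply/matrixP => i j; rewrite !mxE.
Qed.

Lemma cullis_colperm (F : fieldType) (N k : nat) (X : 'M[F]_(N, k)) (s : 'S_k) :
  cullis_det (col_perm s X) = (-1) ^+ s * cullis_det X.
Proof.
rewrite /cullis_det big_distrr /=; apply: eq_bigr => c _.
rewrite col_permE -mul_rowsub_mx det_mulmx det_perm odd_permV.
by rewrite [RHS]mulrC mulrA.
Qed.

Lemma cullis_eqcol (F : fieldType) (N k : nat) (X : 'M[F]_(N, k)) (i j : 'I_k) :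
  i != j -> (forall r, X r i = X r j) -> cullis_det X = 0.
Proof.
move=> ij eqX; rewrite /cullis_det big1 // => c _.
rewrite -det_tr (@determinant_alternate _ _ _ i j) ?mulr0 // => r.
by rewrite !mxE.
Qed.

Lemma sort_inj (k m : nat) (f : {ffun 'I_k -> 'I_m}) : injective f ->
  exists c : {ffun 'I_k -> 'I_m}, exists s : 'S_k, incr_fun c /\ forall i, f i = c (s i).
Proof.
move=> finj.
pose S := [set f i | i in 'I_k].
have cardS : size (enum S) = k by rewrite -cardE card_imset // card_ord.
have srt : sorted (relpre val ltn) (enum S).
  rewrite /enum_mem; apply: sorted_filter; first by move=> x y z /=; apply: ltn_trans.
  by rewrite -enumT -sorted_map val_enum_ord iota_ltn_sorted.
have memS : forall i, f i \in enum S by move=> i; rewrite mem_enum; apply: imset_f.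
have H : forall i, (index (f i) (enum S) < k)%N by move=> i; rewrite -[X in (_ < X)%N]cardS index_mem.
pose pi := fun i => Ordinal (H i).
have pinj : injective pi.
  move=> i j /(congr1 val) /= eqij; apply: finj.
  by rewrite -(nth_index (f i) (memS i)) eqij nth_index.
pose c := [ffun a : 'I_k => nth (f a) (enum S) a].
exists c, (perm pinj); split.
  apply/forallP => i; apply/forallP => j; apply/implyP => ij.
  rewrite !ffunE (set_nth_default (f i) (f j)) ?cardS //.
  have := sorted_ltn_nth _ (f i) srt; apply => //=.
  - by move=> x y z /=; apply: ltn_trans.
  - by rewrite inE cardS.
  - by rewrite inE cardS.
move=> i; rewrite ffunE permE /=.
by rewrite (set_nth_default (f i)) ?nth_index // cardS.
Qed.

Lemma cullis_vanish (F : fieldType) (N M k : nat) (B : 'M[F]_(N, M)) :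
  (forall c : {ffun 'I_k -> 'I_M}, incr_fun c -> cullis_det (colsub c B) = 0) ->
  forall Y : 'M[F]_(M, k), cullis_det (B *m Y) = 0.
Proof.
move=> Hc Y; rewrite cullis_expand big1 // => f _.
case: (boolP [exists i, exists j, (i != j) && (f i == f j)]).
  move=> /existsP [i /existsP [j /andP [ij /eqP fij]]].
  by rewrite (@cullis_eqcol _ _ _ _ i j) ?mulr0 // => r; rewrite !mxE fij.
move=> /negP nex.
have finj : injective f.
  move=> i j fij; apply/eqP; apply/negPn/negP => ij; apply: nex.
  by apply/existsP; exists i; apply/existsP; exists j; rewrite ij fij eqxx.
have [c [s [ic fcs]]] := @sort_inj _ _ f finj.
have -> : colsub f B = col_perm s (colsub c B).
  by apply/matrixP => i j; rewrite !mxE fcs.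
by rewrite cullis_colperm Hc // !mulr0.
Qed.

Lemma incrP (k N : nat) (d : {ffun 'I_k -> 'I_N}) : incr_fun d ->
  forall i j : 'I_k, (i < j)%N -> (d i < d j)%N.
Proof. by move=> /forallP H i j ij; have /forallP/(_ j)/implyP := H i; apply. Qed.

Lemma incr_inj (k N : nat) (d : {ffun 'I_k -> 'I_N}) : incr_fun d -> injective d.
Proof.
move=> /incrP H i j dij; apply: val_inj.
case: (ltngtP i j) => // [/H|/H]; rewrite dij ltnn //.
Qed.

Lemma incr_sorted (k N : nat) (d : {ffun 'I_k -> 'I_N}) : incr_fun d ->
  sorted (relpre val ltn) (map d (enum 'I_k)).
Proof.
move=> /incrP H; apply: (homo_sorted (e := relpre val ltn)) => //.
by rewrite -sorted_map val_enum_ord iota_ltn_sorted.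
Qed.

Lemma det_indicator (F : fieldType) (k N : nat) (d e : {ffun 'I_k -> 'I_N}) :
  incr_fun d -> incr_fun e ->
  \det (\matrix_(b, a) ((d b == e a)%:R : F)) = (d == e)%:R.
Proof.
move=> id ie; have [<-|dne] := eqVneq d e.
  rewrite (_ : \matrix_(b, a) _ = 1%:M) ?det1 //; apply/matrixP => i j; rewrite !mxE.
  by rewrite (inj_eq (@incr_inj _ _ d id)).
case: (boolP [forall b, exists a, d b == e a]) => [Hall|].
  exfalso; move/eqP: dne; apply.
  have sub : {subset map d (enum 'I_k) <= map e (enum 'I_k)}.
    move=> x /mapP [b _ ->]; have /existsP [a /eqP ->] := forallP Hall b.
    by apply: map_f; rewrite mem_enum.
  have U : uniq (map d (enum 'I_k)) by rewrite (map_inj_uniq (@incr_inj _ _ d id)) enum_uniq.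
  have sz : (size (map e (enum 'I_k)) <= size (map d (enum 'I_k)))%N by rewrite !size_map.
  have [_ eqs] := uniq_min_size U sub sz.
  have eqm : map d (enum 'I_k) = map e (enum 'I_k).
    apply: (irr_sorted_eq (leT := relpre val ltn)) => //.
    - by move=> x y z /=; apply: ltn_trans.
    - by move=> x /=; rewrite ltnn.
    - exact: incr_sorted.
    - exact: incr_sorted.
  by apply/ffunP => i; apply: (proj2 (eq_in_map _ _ _) eqm); rewrite mem_enum.
rewrite negb_forall => /existsP [b]; rewrite negb_exists => /forallP Hb.
rewrite (expand_det_row _ b) big1 // => a _; rewrite !mxE.
by rewrite (negbTE (Hb a)) mul0r.
Qed.


Lemma sign_mod2 (F : fieldType) (a b : nat) : (a %% 2 = b %% 2)%N -> (-1) ^+ a = (-1) ^+ b :> F.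
Proof.
rewrite !modn2 => H; rewrite -(signr_odd F a) -(signr_odd F b).
by move: H; case: (odd a); case: (odd b).
Qed.

Lemma incr_ge (k N : nat) (c : {ffun 'I_k -> 'I_N}) : incr_fun c -> forall b : 'I_k, (b <= c b)%N.
Proof.
move=> /incrP H [b hb] /=.
elim: b hb => [|b IH] hb //.
have hb' : (b < k)%N by apply: ltnW.
have := IH hb'; have := H (Ordinal hb') (Ordinal hb) (ltnSn b); lia.
Qed.

Lemma sum_pick (F : fieldType) (k N : nat) (X : {ffun 'I_k -> 'I_N}) (G : {ffun 'I_k -> 'I_N} -> F) :
  incr_fun X -> \sum_(d | incr_fun d) G d * (d == X)%:R = G X.
Proof.
move=> iX; rewrite (bigD1 X) //= eqxx mulr1 big1 ?addr0 // => d /andP [_ dX].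
by rewrite (negbTE dX) mulr0.
Qed.


Definition Bmat (F : fieldType) (m : nat) (z : 'cV[F]_m.+1) : 'M[F]_(m.+1, m) :=
  \matrix_(i, j) (if i == ord0 then z (lift ord0 j) 0 else (i == lift ord0 j)%:R).

Definition Dz (k m : nat) (c : {ffun 'I_k -> 'I_m}) : {ffun 'I_k -> 'I_m.+1} :=
  [ffun a => lift ord0 (c a)].

Definition Da (k m : nat) (c : {ffun 'I_k.+1 -> 'I_m}) (a : 'I_k.+1) : {ffun 'I_k.+1 -> 'I_m.+1} :=
  [ffun b => if unlift ord0 b is Some b' then lift ord0 (c (lift a b')) else ord0].

Lemma lift_mono (n : nat) (h : 'I_n.+1) (i j : 'I_n) : (i < j)%N -> (lift h i < lift h j)%N.
Proof. rewrite /= /bump; case: leqP; case: leqP; lia. Qed.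

Lemma lift_ge (n : nat) (h : 'I_n.+1) (i : 'I_n) : (i <= lift h i)%N.
Proof. rewrite /= /bump; case: leqP; lia. Qed.

Lemma incr_Dz (k m : nat) (c : {ffun 'I_k -> 'I_m}) : incr_fun c -> incr_fun (Dz c).
Proof.
move=> /incrP H; apply/forallP => i; apply/forallP => j; apply/implyP => ij.
by rewrite !ffunE !lift0 ltnS; apply: H.
Qed.

Lemma incr_Da (k m : nat) (c : {ffun 'I_k.+1 -> 'I_m}) (a : 'I_k.+1) :
  incr_fun c -> incr_fun (Da c a).
Proof.
move=> /incrP H; apply/forallP => i; apply/forallP => j; apply/implyP => ij.
rewrite !ffunE; move: ij.
case: (unliftP ord0 i) => [i' ->|->]; case: (unliftP ord0 j) => [j' ->|->] //=.
- rewrite /bump /= !add1n !ltnS => ij; apply: H; exact: lift_mono.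


Qed.

Lemma claim (F : fieldType) (k m : nat) (z : 'cV[F]_m.+1) (c : {ffun 'I_k.+1 -> 'I_m})
  (d : {ffun 'I_k.+1 -> 'I_m.+1}) : incr_fun c -> incr_fun d ->
  \det (rowsub d (colsub c (Bmat z))) =
  (d == Dz c)%:R + \sum_(a < k.+1) z (lift ord0 (c a)) 0 * (-1) ^+ a * (d == Da c a)%:R.
Proof.
move=> ic id.
have dpos : forall b : 'I_k.+1, b != ord0 -> d b != ord0.
  move=> b nb; apply/eqP => /(congr1 val) /= db0.
  have H := incrP id (i := ord0) (j := b).
  have : (0 < b)%N by rewrite lt0n; apply: contra nb => /eqP b0; apply/eqP/val_inj.
  by move/H; rewrite db0.
case: (eqVneq (d ord0) ord0) => d0.
- have nDz : (d == Dz c) = false.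
    apply/negbTE/eqP => E; move: d0; rewrite E ffunE => /(congr1 val); rewrite /= /bump add1n //.
  rewrite nDz add0r (expand_det_row _ ord0); apply: eq_bigr => a _.
  rewrite !mxE d0 eqxx /cofactor.
  pose d1 := [ffun b : 'I_k => (d (lift ord0 b) : 'I_m.+1)].
  pose e1 := [ffun b : 'I_k => lift ord0 (c (lift a b))].
  have -> : row' ord0 (col' a (rowsub d (colsub c (Bmat z)))) =
            \matrix_(b, a') ((d1 b == e1 a')%:R).
    apply/matrixP => b a'; rewrite !mxE !ffunE.
    by rewrite (negbTE (dpos _ _)) // eq_sym neq_lift.
  rewrite det_indicator; first last.
  + apply/forallP => i; apply/forallP => j; apply/implyP => ij.
    rewrite !ffunE !lift0 ltnS; apply: (incrP ic); exact: lift_mono.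
  + apply/forallP => i; apply/forallP => j; apply/implyP => ij.
    rewrite !ffunE; apply: (incrP id); by rewrite !lift0.
  have -> : (d1 == e1) = (d == Da c a).
    apply/eqP/eqP => E.
    + apply/ffunP => b; rewrite ffunE; case: (unliftP ord0 b) => [b' ->|->]; last exact: d0.
      by have := congr1 (fun f : {ffun 'I_k -> 'I_m.+1} => f b') E; rewrite !ffunE.
    + by apply/ffunP => b; rewrite !ffunE E ffunE liftK.
  by rewrite mulrA /= add0n.
- have nDa : forall a, (d == Da c a) = false.
    by move=> a; apply/negbTE/eqP => E; move: d0; rewrite E ffunE unlift_none eqxx.
  rewrite big1 ?addr0; last by move=> a _; rewrite nDa mulr0.
  have -> : rowsub d (colsub c (Bmat z)) = \matrix_(b, a) ((d b == Dz c a)%:R).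
    apply/matrixP => b a; rewrite !mxE ffunE.
    case: (eqVneq b ord0) => [->|nb]; first by rewrite (negbTE d0).
    by rewrite (negbTE (dpos _ nb)).
  apply: det_indicator => //; exact: incr_Dz.
Qed.

Lemma sgn_Da (F : fieldType) (k m : nat) (c : {ffun 'I_k.+1 -> 'I_m}) (a : 'I_k.+1) :
  incr_fun c ->
  (-1) ^+ a * cullis_sgn F (Da c a) = cullis_sgn F (Dz c) * (-1) ^+ (Dz c a - a)%N.
Proof.
move=> ic; rewrite /cullis_sgn -!exprD; apply: sign_mod2.
have ge := incr_ge ic.
set E0 := (\sum_(b < k.+1) (Dz c b - b))%N.
set Ea := (\sum_(b < k.+1) (Da c a b - b))%N.
have h1 : (E0 + \sum_(b < k.+1) b = \sum_(b < k.+1) c b + k.+1)%N.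
  rewrite /E0 -big_split /=.
  rewrite (eq_bigr (fun b => c b + 1)%N); last first.
    by move=> b _; rewrite ffunE lift0 subnK //; have := ge b; lia.
  by rewrite big_split /= sum_nat_const card_ord muln1.
have h2 : Ea = (\sum_(b < k) (c (lift a b) - b))%N.
  rewrite /Ea big_ord_recl {1}ffunE unlift_none /= add0n.
  by apply: eq_bigr => b _; rewrite ffunE liftK !lift0 subSS.
have h3 : (\sum_(b < k) (c (lift a b) - b) + \sum_(b < k) b = \sum_(b < k) c (lift a b))%N.
  rewrite -big_split; apply: eq_bigr => b _ /=; rewrite subnK //.
  by have := ge (lift a b); have := lift_ge a b; lia.
have h4 : (\sum_(b < k.+1) c b = c a + \sum_(b < k) c (lift a b))%N by rewrite (bigD1_ord a).
have h5 : (\sum_(b < k.+1) (b : nat) = \sum_(b < k) (b : nat) + k)%N by rewrite big_ord_recr.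
have hDa : (Dz c a = (c a).+1 :> nat) by rewrite ffunE lift0.
have ga := ge a.
rewrite hDa h2; lia.
Qed.

Lemma value (F : fieldType) (k m : nat) (z : 'cV[F]_m.+1) (c : {ffun 'I_k.+1 -> 'I_m}) :
  incr_fun c ->
  cullis_det (colsub c (Bmat z)) =
  cullis_sgn F (Dz c) * (1 + \sum_(a < k.+1) z (Dz c a) 0 * (-1) ^+ (Dz c a - a)%N).
Proof.
move=> ic; rewrite /cullis_det.
under eq_bigr => d id do rewrite (claim z ic id) mulrDr big_distrr /=.
rewrite big_split /= (sum_pick (fun d => cullis_sgn F d)) ?incr_Dz //.
rewrite exchange_big /= mulrDr mulr1 big_distrr /=; congr (_ + _); apply: eq_bigr => a _.
rewrite (eq_bigr (fun d => (z (lift ord0 (c a)) 0 * (-1) ^+ a) * (cullis_sgn F d * (d == Da c a)%:R))); last first.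
  by move=> d _; rewrite mulrCA.
rewrite -big_distrr /= (sum_pick (fun d => cullis_sgn F d)) ?incr_Da //.
by rewrite -mulrA sgn_Da // [Dz c a]ffunE mulrCA.
Qed.

Lemma sum_delta (F : fieldType) (n : nat) (G : 'I_n -> F) (j : 'I_n) :
  \sum_(i < n) G i * (i == j)%:R = G j.
Proof.
rewrite (bigD1 j) //= eqxx mulr1 big1 ?addr0 // => i /negbTE ->; by rewrite mulr0.
Qed.

Lemma lift0_neq (m : nat) (l : 'I_m) : (lift ord0 l == ord0) = false.
Proof. by rewrite eq_sym (negbTE (neq_lift _ _)). Qed.

Lemma Bmat_ker (F : fieldType) (m : nat) (z : 'cV[F]_m.+1) :
  z ord0 0 = -1 -> z^T *m Bmat z = 0.
Proof.
move=> z0; apply/matrixP => i j; rewrite [i]ord1 !mxE big_ord_recl !mxE eqxx z0.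
under eq_bigr => l _ do rewrite !mxE lift0_neq (inj_eq (@lift_inj _ ord0)).
by rewrite (sum_delta (fun l => z (lift ord0 l) 0)) mulN1r addNr.
Qed.

Theorem mainTheorem5 (F : fieldType) (n k : nat) (hk : (1 <= k)%N) (hkn : (k <= n)%N)
  (z : 'cV[F]_n) (hz1 : forall i : 'I_n, nat_of_ord i = 0%N -> z i 0 = -1) :
  (forall X : 'M[F]_(n, k), z^T *m X = 0 -> cullis_det X = 0) <->
  (forall c : {ffun 'I_k -> 'I_n}, incr_fun c ->
     (forall a : 'I_k, nat_of_ord (c a) <> 0%N) ->
     1 + \sum_(a < k) z (c a) 0 * (-1) ^+ (c a - a)%N = 0).
Proof.
case: k hk hkn => [//|k] _ hkn.
case: n hkn z hz1 => [//|m] hkn z hz1.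
have z0 : z ord0 0 = -1 by apply: hz1.
split.
- move=> HA c ic c0.
  have H : forall a, ((c a).-1 < m)%N.
    by move=> a; have := c0 a; have := ltn_ord (c a); lia.
  pose c' := [ffun a => Ordinal (H a)].
  have Dc : Dz c' = c.
    apply/ffunP => a; apply: val_inj; rewrite !ffunE /= /bump add1n.
    by have := c0 a; lia.
  have ic' : incr_fun c'.
    apply/forallP => i; apply/forallP => j; apply/implyP => ij; rewrite !ffunE /=.
    by have := incrP ic ij; have := c0 i; lia.
  have zB : z^T *m colsub c' (Bmat z) = 0.
    by rewrite mulmx_colsub Bmat_ker //; apply/matrixP => i j; rewrite !mxE.
  have := HA _ zB; rewrite value // Dc => /eqP; rewrite mulf_eq0 /cullis_sgn signr_eq0 /=.
  by move/eqP.
- move=> HB X zX.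
  pose Y := \matrix_(i < m, j < k.+1) X (lift ord0 i) j.
  have -> : X = Bmat z *m Y.
    apply/matrixP => i j; rewrite !mxE.
    case: (unliftP ord0 i) => [i' ->|->].
      under eq_bigr => l _ do rewrite !mxE lift0_neq (inj_eq (@lift_inj _ ord0)).
      rewrite (bigD1 i') //= eqxx mul1r big1 ?addr0 // => l /negbTE.
      by rewrite eq_sym => ->; rewrite mul0r.
    under eq_bigr => l _ do rewrite !mxE eqxx.
    have := congr1 (fun M : 'M[F]_(1, k.+1) => M 0 j) zX; rewrite !mxE big_ord_recl !mxE z0 mulN1r.
    move/eqP; rewrite addrC subr_eq0 => /eqP <-; apply: eq_bigr => l _; by rewrite mxE.
  apply: cullis_vanish => c' ic'.
  rewrite value // HB ?mulr0 //; first exact: incr_Dz.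
  by move=> a; rewrite ffunE lift0.
Qed.
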